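(* Let $(X,\tau)$ be a topological space with $|X|=\kappa$. Then: (i) $X$ is completely Hausdorff if and only if every compact subset of $X$ (of cardinality $\le\kappa$) is zero-closed; (ii) $X$ is Urysohn if and only if every compact subset of $X$ is Urysohn-closed; (iii) $X$ is Hausdorff if and only if every compact subset of $X$ is $\theta$-closed; (iv) $X$ is a kc-space if and only if every compact subset of $X$ is closed; (v) $X$ is weakly Hausdorff if and only if every compact subset of $X$ of cardinality $\le 1$ is $\delta$-closed; (vi) $X$ is $T_1$ if and only if every compact subset of $X$ of cardinality $\le 1$ is closed; (vii) $X$ is $T_0$ if and only if every compact subset of $X$ of cardinality $\le 1$ is $\lambda$-closed.
   Context: A subset $A$ of $X$ is zero-open if for each $x\in A$ there exist a zero-set $Z$ and a cozero-set $C$ of $X$ with $x\in C\subseteq Z\subseteq A$; zero-closed sets are complements of zero-open sets. $X$ is completely Hausdorff if any two distinct points have disjoint cozero-set neighborhoods. A set $A$ is Urysohn-open if for each $x\in A$ there are open $U,V$ with $x\in U\subseteq \mathrm{Cl}(U)\subseteq V\subseteq \mathrm{Cl}(V)\subseteq A$; Urysohn-closed sets are their complements. $X$ is Urysohn if any two distinct points have open neighborhoods with disjoint closures. The $\theta$-closure of $A$ is $\{x\in X:\mathrm{Cl}(U)\cap A\neq\emptyset$ for every open $U\ni x\}$, and $A$ is $\theta$-closed if it equals its $\theta$-closure. A set $U$ is regular open if $U=\mathrm{Int}(\mathrm{Cl}(U))$; $x$ is a $\delta$-cluster point of $A$ if $A\cap U\ne\emptyset$ for every regular open $U\ni x$;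 $A$ is $\delta$-closed if it contains all its $\delta$-cluster points. A $\Lambda$-set is an intersection of open sets; $A$ is $\lambda$-closed if $A=L\cap C$ with $L$ a $\Lambda$-set and $C$ closed. $X$ is a kc-space if every compact subset is closed. $X$ is weakly Hausdorff if every singleton is $\delta$-closed (equivalently its semi-regularization is $T_1$). *)

(* Defs.v *)
From HB Require Import structures.
From mathcomp Require Import all_boot all_order all_algebra.
From mathcomp Require Import all_classical all_reals all_analysis.
From mathcomp Require Import Rstruct Rstruct_topology.
From Stdlib Require Import Rdefinitions.

Set Implicit Arguments.
Unset Strict Implicit.
Unset Printing Implicit Defensive.

Import Order.TTheory GRing.Theory Num.Theory.
Local Open Scope classical_set_scope.

Section Defs.
Context {T : topologicalType}.

Definition zero_set (A : set T) : Prop :=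
  exists f : T -> Rdefinitions.R, continuous f /\ A = f @^-1` [set 0%R].

Definition cozero_set (A : set T) : Prop :=
  exists f : T -> Rdefinitions.R, continuous f /\ A = f @^-1` [set~ 0%R].

Definition zero_open (A : set T) : Prop :=
  forall x, A x -> exists Z C : set T,
    [/\ zero_set Z, cozero_set C, C x, C `<=` Z & Z `<=` A].

Definition zero_closed (A : set T) : Prop := zero_open (~` A).

Definition completely_hausdorff : Prop :=
  forall x y : T, x <> y -> exists U V : set T,
    [/\ cozero_set U, cozero_set V, U x, V y & U `&` V = set0].

Definition urysohn_open (A : set T) : Prop :=
  forall x, A x -> exists U V : set T,
    [/\ open U, open V, U x, closure U `<=` V & closure V `<=` A].

Definition urysohn_closed (A : set T) : Prop := urysohn_open (~` A).

Definition urysohn_space : Prop :=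
  forall x y : T, x <> y -> exists U V : set T,
    [/\ open U, open V, U x, V y & closure U `&` closure V = set0].

Definition theta_closure (A : set T) : set T :=
  [set x | forall U : set T, open U -> U x -> closure U `&` A !=set0].

Definition theta_closed (A : set T) : Prop := theta_closure A = A.

Definition regular_open (U : set T) : Prop := U = interior (closure U).

Definition delta_cluster (A : set T) (x : T) : Prop :=
  forall U : set T, regular_open U -> U x -> A `&` U !=set0.

Definition delta_closed (A : set T) : Prop :=
  forall x, delta_cluster A x -> A x.

Definition Lambda_set (L : set T) : Prop :=
  exists F : set (set T), (forall U, F U -> open U) /\ L = \bigcap_(U in F) U.

Definition lambda_closed (A : set T) : Prop :=
  exists L C : set T, [/\ Lambda_set L, closed C & A = L `&` C].

Definition kc_space : Prop := forall K : set T, compact K -> closed K.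

Definition weakly_hausdorff : Prop := forall x : T, delta_closed [set x].

End Defs.

(* Main.v *)
Require Import Defs.
From HB Require Import structures.
From mathcomp Require Import all_boot all_order all_algebra.
From mathcomp Require Import all_classical all_reals all_analysis.
From mathcomp Require Import Rstruct Rstruct_topology.
Import Num.Theory GRing.Theory.
Local Open Scope classical_set_scope.
Local Open Scope card_scope.

Lemma card1P (T : Type) (K : set T) :
  K #<= [set: unit] <-> (forall a b, K a -> K b -> a = b).
Proof.
split.
- move=> /pcard_injP [f fi] a b Ka Kb. apply: fi.
  + exact: mem_set.
  + exact: mem_set.
  + by case: (f a); case: (f b).
- move=> H. apply/pcard_injP. exists (fun=> tt) => a b Ka Kb _.
  apply: H. exact: set_mem. exact: set_mem.
Qed.

Lemma card1_cases (T : Type) (K : set T) :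
  K #<= [set: unit] -> K = set0 \/ exists x, K = [set x].
Proof.
move=> /card1P K1.
have [[x Kx]|K0] := pselect (K !=set0).
  right; exists x; apply/seteqP; split => y; first by move=> Ky; exact: K1 Ky Kx.
  by move=> ->.
left; apply/seteqP; split => y // Ky; apply: K0; by exists y.
Qed.

Lemma set1_card (T : Type) (x : T) : [set x] #<= [set: unit].
Proof.
apply/pcard_injP; exists (fun=> tt) => a b Ka Kb _.
by rewrite (set_mem Ka) (set_mem Kb).
Qed.

Lemma clsub (T : topologicalType) (X Y : set T) :
  closed Y -> X `<=` Y -> closure X `<=` Y.
Proof. move=> cY hXY x Xx; apply: cY; exact: closureS hXY x Xx. Qed.

Lemma compact_sep (T : topologicalType) (P Q : set T -> Prop)
  (S : set T -> set T -> Prop) (K : set T) :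
  compact K ->
  (forall B, Q B -> open B) ->
  P setT -> Q set0 -> S setT set0 ->
  (forall A A' B B', P A -> P A' -> Q B -> Q B' -> S A B -> S A' B' ->
     [/\ P (A `&` A'), Q (B `|` B') & S (A `&` A') (B `|` B')]) ->
  (forall k, K k -> exists A B, [/\ P A, Q B, B k & S A B]) ->
  exists A B, [/\ P A, Q B, K `<=` B & S A B].
Proof.
move=> cK oQ PT Q0 S0 comb pw.
apply: contrapT => nH.
pose good := fun B => exists A, [/\ P A, Q B & S A B].
pose F := filter_from good (fun B => K `\` B).
have FF : Filter F.
  apply: filter_from_filter; first by exists set0, setT.
  move=> B1 B2 [A1 [PA1 QB1 S1]] [A2 [PA2 QB2 S2]].
  have [PA QB SAB] := comb _ _ _ _ PA1 PA2 QB1 QB2 S1 S2.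
  exists (B1 `|` B2); first by exists (A1 `&` A2).
  by move=> x [Kx /not_orP[]].
have PF : ProperFilter F.
  apply: filter_from_proper => B [A [PA QB SAB]].
  have [//|e] := pselect (K `\` B !=set0).
  exfalso; apply: nH; exists A, B; split => // x Kx.
  apply: contrapT => nB; apply: e; by exists x.
have FK : F K by exists set0; [exists setT|move=> x []].
have [k [Kk clk]] := cK F PF FK.
have [A [B [PA QB Bk SAB]]] := pw k Kk.
have FB : F (K `\` B) by exists B; [exists A|].
have NB : nbhs k B by apply: open_nbhs_nbhs; split => //; apply: oQ.
have [y [[_ nBy] By]] := clk _ _ FB NB.
exact: nBy.
Qed.

Lemma part4 (T : topologicalType) :
  @kc_space T <-> (forall K : set T, compact K -> closed K).
Proof. by []. Qed.

Lemma part6 (T : topologicalType) :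
  @accessible_space T <->
     (forall K : set T, compact K -> K #<= [set: unit] -> closed K).
Proof.
split.
- move=> acc K _ /card1_cases [->|[x ->]]; first exact: closed0.
  exact: accessible_closed_set1.
- move=> H x y xy; exists (~` [set y]); split.
  + apply: closed_openC; apply: H; [exact: compact_set1|exact: set1_card].
  + by apply/mem_set => /= e; rewrite e eqxx in xy.
  + by apply/mem_set => /=; apply.
Qed.

Lemma part5 (T : topologicalType) :
  @weakly_hausdorff T <->
     (forall K : set T, compact K -> K #<= [set: unit] -> delta_closed K).
Proof.
split.
- move=> wh K _ /card1_cases [->|[x ->]]; last exact: wh.
  move=> x dx.
  have rT : regular_open (@setT T) by rewrite /regular_open closureT interiorT.
  by have [z [z0 _]] := dx setT rT I.
- move=> H x; apply: H; [exact: compact_set1|exact: set1_card].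
Qed.

Lemma part7 (T : topologicalType) :
  @kolmogorov_space T <->
     (forall K : set T, compact K -> K #<= [set: unit] -> lambda_closed K).
Proof.
split.
- move=> kol K _ /card1_cases [->|[x ->]].
    exists setT, set0; split; last by rewrite setI0.
    + by exists set0; split => //; rewrite bigcap_set0.
    + exact: closed0.
  exists (\bigcap_(U in [set U : set T | open U /\ U x]) U), (closure [set x]).
  split.
  + by exists [set U : set T | open U /\ U x]; split => // U [].
  + exact: closed_closure.
  + apply/seteqP; split => y.
      by move=> ->; split; [move=> U [] | exact: subset_closure].
    move=> [Ly Cy]; apply: contrapT => nyx.
    have xy : x != y by apply/eqP => e; apply: nyx; rewrite e.
    have [A [[/set_mem nA /set_mem nyA]|[/set_mem nA /set_mem nxA]]] := kol x y xy.
    * move: nA; rewrite nbhsE => -[B [oB Bx] BA].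
      by apply: nyA; apply: BA; apply: Ly.
    * by have [z [/= -> Az]] := Cy A nA; apply: nxA.
- move=> H x y xy.
  have c1 : compact [set x] by exact: compact_set1.
  have [L [Cl [[F [oF ->]] cC e]]] := H [set x] c1 (set1_card _ x).
  have Lx : ((\bigcap_(U in F) U) `&` Cl) x by rewrite -e.
  have nLy : ~ ((\bigcap_(U in F) U) `&` Cl) y.
    by rewrite -e => /= yx; rewrite yx eqxx in xy.
  have [Cy|nCy] := pselect (Cl y).
    have [U FU nUy] : exists2 U, F U & ~ U y.
      apply: contrapT => nU; apply: nLy; split => // U FU.
      by apply: contrapT => nUy; apply: nU; exists U.
    exists U; left; split; last by apply/mem_set.
    apply/mem_set; apply: open_nbhs_nbhs; split; first exact: oF.
    by apply: Lx.1.
  exists (~` Cl); right; split; last by apply/mem_set => /=; apply; exact: Lx.2.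
  apply/mem_set; apply: open_nbhs_nbhs; split => //; exact: closed_openC.
Qed.

Section P2.
Local Open Scope ring_scope.

Lemma cozeroE (T : topologicalType) (A : set T) : cozero_set A <->
  exists f : T -> Rdefinitions.R, continuous f /\ A = f @^-1` [set~ 0].
Proof. by rewrite /cozero_set R0E. Qed.

Lemma zeroE (T : topologicalType) (A : set T) : zero_set A <->
  exists f : T -> Rdefinitions.R, continuous f /\ A = f @^-1` [set 0].
Proof. by rewrite /zero_set R0E. Qed.

Lemma cozero_open (T : topologicalType) (A : set T) : cozero_set A -> open A.
Proof.
move=> /cozeroE [f [cf ->]]; rewrite -preimage_setC; apply: closed_openC.
move/continuous_closedP: cf; apply; exact: (@closed_eq _ 0).
Qed.

Lemma cozeroT (T : topologicalType) : cozero_set (@setT T).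
Proof.
apply/cozeroE; exists (fun=> 1); split; first by move=> x; exact: cst_continuous.
by apply/seteqP; split => // z _ /= /eqP; rewrite oner_eq0.
Qed.

Lemma cozero0 (T : topologicalType) : cozero_set (@set0 T).
Proof.
apply/cozeroE; exists (fun=> 0); split; first by move=> x; exact: cst_continuous.
by apply/seteqP; split => // z /=; apply.
Qed.

Lemma cozeroI (T : topologicalType) (A B : set T) :
  cozero_set A -> cozero_set B -> cozero_set (A `&` B).
Proof.
move=> /cozeroE[f [cf ->]] /cozeroE[g [cg ->]]; apply/cozeroE.
exists (fun z => f z * g z); split.
  move=> x; exact: continuousM (cf x) (cg x).
apply/seteqP; split => z /=.
- move=> [fz gz] /eqP; rewrite mulf_eq0 => /orP[] /eqP; [exact: fz|exact: gz].
- by move=> h; split => e; apply: h; rewrite e ?mul0r ?mulr0.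
Qed.

Lemma cozeroU (T : topologicalType) (A B : set T) :
  cozero_set A -> cozero_set B -> cozero_set (A `|` B).
Proof.
move=> /cozeroE[f [cf ->]] /cozeroE[g [cg ->]]; apply/cozeroE.
exists (fun z => f z * f z + g z * g z); split.
  move=> x.
  have h1 := continuousM (cf x) (cf x).
  have h2 := continuousM (cg x) (cg x).
  have h3 := @continuousD _ Rdefinitions.R^o _ _ _ x h1 h2.
  exact: h3.
apply/seteqP; split => z /=.
- move=> fgz /eqP; rewrite -!expr2 paddr_eq0 ?sqr_ge0 // !sqrf_eq0.
  by move=> /andP[/eqP f0 /eqP g0]; case: fgz.
- move=> h; apply: contrapT => /not_orP[/contrapT f0 /contrapT g0].
  by apply: h; rewrite f0 g0 mulr0 addr0.
Qed.

End P2.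

Lemma part1 (T : topologicalType) :
  (@completely_hausdorff T <->
     (forall K : set T, compact K -> K #<= [set: T] -> zero_closed K)).
Proof.
split.
- move=> cH K cK _ x nKx.
  have [A [B [[cA Ax] cB KB AB0]]] : exists A B,
      [/\ cozero_set A /\ A x, cozero_set B, K `<=` B & A `&` B = set0].
    apply: compact_sep => //.
    + exact: cozero_open.
    + by split; [exact: cozeroT|].
    + exact: cozero0.
    + by rewrite setI0.
    + move=> A A' B B' [cA Ax] [cA' A'x] cB cB' e1 e2; split.
      * by split; [exact: cozeroI|split].
      * exact: cozeroU.
      * apply/seteqP; split => // z [[Az A'z] [Bz|B'z]].
          by have h : (A `&` B) z := conj Az Bz; rewrite e1 in h.
        by have h : (A' `&` B') z := conj A'z B'z; rewrite e2 in h.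
    + move=> k Kk; have xk : x <> k by move=> e; apply: nKx; rewrite e.
      have [U [V [cU cV Ux Vk UV]]] := cH x k xk.
      by exists U, V; split.
  move: cB => /cozeroE [g [cg eB]].
  exists (~` B), A; split => //.
  + by apply/zeroE; exists g; split => //; rewrite eB preimage_setC setCK.
  + by move=> z Az Bz; have h : (A `&` B) z := conj Az Bz; rewrite AB0 in h.
  + by move=> z nBz Kz; exact: nBz (KB z Kz).
- move=> H x y xy.
  have c1 : compact [set y] by exact: compact_set1.
  have [Z [Co [zZ cCo Cox CoZ Zy]]] := H _ c1 (card_leT _) x xy.
  move: zZ => /zeroE [f [cf eZ]].
  exists Co, (f @^-1` [set~ 0%R]); split => //.
  + by apply/cozeroE; exists f.
  + move=> fy0; have Zy' : Z y by rewrite eZ.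
    exact: Zy y Zy' erefl.
  + apply/seteqP; split => // z [Coz fz].
    have := CoZ z Coz; rewrite eZ => /= e; exact: fz e.
Qed.

Lemma s_closC (T : topologicalType) (V : set T) :
  open V -> closure (~` closure V) `<=` ~` V.
Proof.
move=> oV; apply: clsub; first exact: open_closedC.
move=> z nz Vz; apply: nz; exact: subset_closure.
Qed.

Lemma part2 (T : topologicalType) :
  (@urysohn_space T <-> (forall K : set T, compact K -> urysohn_closed K)).
Proof.
split.
- move=> uT K cK x nKx.
  have [A [B [[oA Ax] oB KB AB0]]] : exists A B,
      [/\ open A /\ A x, open B, K `<=` B & closure A `&` closure B = set0].
    apply: compact_sep => //.
    + by split; [exact: openT|].
    + exact: open0.
    + by rewrite closure0 setI0.
    + move=> A A' B B' [oA Ax] [oA' A'x] oB oB' e1 e2; split.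
      * by split; [exact: openI|split].
      * exact: openU.
      * apply/seteqP; split => // z [/closureI [cA cA']]; rewrite closureU => -[cB|cB'].
          by have h : (closure A `&` closure B) z := conj cA cB; rewrite e1 in h.
        by have h : (closure A' `&` closure B') z := conj cA' cB'; rewrite e2 in h.
    + move=> k Kk; have xk : x <> k by move=> e; apply: nKx; rewrite e.
      have [U [V [oU oV Ux Vk UV]]] := uT x k xk.
      by exists U, V; split.
  exists A, (~` closure B); split => //.
  + by apply: closed_openC; exact: closed_closure.
  + by move=> z cAz cBz; have h : (closure A `&` closure B) z := conj cAz cBz; rewrite AB0 in h.
  + by move=> z /(@s_closC _ _ oB) nBz Kz; exact: nBz (KB z Kz).
- move=> H x y xy.
  have c1 : compact [set y] by exact: compact_set1.
  have [U [V [oU oV Ux clUV clV]]] := H _ c1 x xy.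
  exists U, (~` closure V); split => //.
  + by apply: closed_openC; exact: closed_closure.
  + by move=> cVy; exact: (clV y cVy erefl).
  + apply/seteqP; split => // z [cUz cz].
    exact: (@s_closC _ _ oV) z cz (clUV z cUz).
Qed.

Lemma part3 (T : topologicalType) :
  (@hausdorff_space T <-> (forall K : set T, compact K -> theta_closed K)).
Proof.
split.
- move=> hT K cK; apply/seteqP; split => x; last first.
    by move=> Kx U oU Ux; exists x; split => //; exact: subset_closure.
  move=> thx; apply: contrapT => nKx.
  have [A [B [[oA Ax] oB KB AB0]]] : exists A B,
      [/\ open A /\ A x, open B, K `<=` B & A `&` B = set0].
    apply: compact_sep => //.
    + by split; [exact: openT|].
    + exact: open0.
    + by rewrite setI0.
    + move=> A A' B B' [oA Ax] [oA' A'x] oB oB' e1 e2; split.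
      * by split; [exact: openI|split].
      * exact: openU.
      * apply/seteqP; split => // z [[Az A'z] [Bz|B'z]].
          by have h : (A `&` B) z := conj Az Bz; rewrite e1 in h.
        by have h : (A' `&` B') z := conj A'z B'z; rewrite e2 in h.
    + move=> k Kk; have xk : x != k by apply/eqP => e; apply: nKx; rewrite e.
      move: hT; rewrite open_hausdorff => hT.
      have [[U V] /= [/set_mem Ux /set_mem Vk] [oU oV /eqP UV]] := hT x k xk.
      by exists U, V; split.
  have [z [cz Kz]] := thx A oA Ax.
  have nB : nbhs z B by apply: open_nbhs_nbhs; split => //; exact: KB.
  have [w [Aw Bw]] := cz B nB.
  by have h : (A `&` B) w := conj Aw Bw; rewrite AB0 in h.
- move=> H; rewrite open_hausdorff => x y xy.
  have c1 : compact [set y] by exact: compact_set1.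
  have e := H _ c1.
  have nth : ~ theta_closure [set y] x.
    by rewrite e => /= exy; rewrite exy eqxx in xy.
  apply: contrapT => nAB; apply: nth => U oU Ux.
  have [cUy|ncUy] := pselect (closure U y); first by exists y; split.
  exfalso; apply: nAB; exists (U, ~` closure U) => /=.
    by split; apply/mem_set.
  split => //; first by apply: closed_openC; exact: closed_closure.
  apply/eqP/seteqP; split => // z [Uz nz]; apply: nz; exact: subset_closure.
Qed.

Theorem mainTheorem1 (T : topologicalType) :
  (@completely_hausdorff T <->
     (forall K : set T, compact K -> K #<= [set: T] -> zero_closed K)) /\
  (@urysohn_space T <-> (forall K : set T, compact K -> urysohn_closed K)) /\
  (@hausdorff_space T <-> (forall K : set T, compact K -> theta_closed K)) /\
  (@kc_space T <-> (forall K : set T, compact K -> closed K)) /\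
  (@weakly_hausdorff T <->
     (forall K : set T, compact K -> K #<= [set: unit] -> delta_closed K)) /\
  (@accessible_space T <->
     (forall K : set T, compact K -> K #<= [set: unit] -> closed K)) /\
  (@kolmogorov_space T <->
     (forall K : set T, compact K -> K #<= [set: unit] -> lambda_closed K)).
Proof.
split; first exact: part1.
split; first exact: part2.
split; first exact: part3.
split; first exact: part4.
split; first exact: part5.
split; first exact: part6.
exact: part7.
Qed.
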